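(* Let $T=(t_{ij})$ be an $\mathbb{N}$-tableau of shape $\lambda$, let $\widehat{T}=(\widehat{t}_{ij})$ be its image under the toggle map, and let $U_T=(u_{ijk})$ be the array defined in the context. Let $(i,j)$ be a box of $\lambda$ and let $m$ be the unique natural number such that $(i+m,j+m)$ is a border box of $\lambda$. Then $\widehat{t}_{ij}=u_{i+m,j+m,m+1}$.
   Context: Partitions are drawn in English notation with matrix coordinates: the box in row $i$ and column $j$ is $(i,j)$. An $\mathbb{N}$-tableau of shape $\lambda$ is an assignment of a nonnegative integer to each box of $\lambda$. A border box of $\lambda$ is a box $(i,j)$ such that $(i+1,j+1)$ is not a box; a corner box is a box $(i,j)$ such that neither $(i+1,j)$ nor $(i,j+1)$ is a box. The toggle map $T\mapsto\widehat{T}$ is defined recursively: $\widehat{\emptyset}=\emptyset$; if $T'$ is obtained from $T$ by adding a corner box $(i,j)$ (of $\mathrm{sh}(T')$) with entry $x$, then $\widehat{T'}$ is obtained from $\widehat{T}$ as follows. For $k\ge1$ let $\beta_k,\gamma_k,\alpha_k$ be the entries of $\widehat{T}$ at $(i-k,j-k)$, $(i-k+1,j-k)$, $(i-k,j-k+1)$ respectively (taken to be $0$ if the box is not in $\mathrm{sh}(T)$). Then $\widehat{T'}$ agrees with $\widehat{T}$ except that for $1\le k<\min(i,j)$ the entry at $(i-k,j-k)$ becomes $\max(\alpha_{k+1},\gamma_{k+1})+\min(\alpha_k,\gamma_k)-\beta_k$, and the entry at $(i,j)$ is $\max(\alpha_1,\gamma_1)+x$. This is independent of the order in which boxes are added.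 The array $U_T=(u_{ijk})$ is indexed by all $(i,j,k)\in\mathbb{Z}^3$ such that $(i+a,j+b)$ is a box of $\lambda$ for some $a,b\in\{0,1,2\}$ and $0\le k\le\min(i,j)+1$. Its entries are: $u_{i,j,0}=0$ and $u_{i,j,\min(i,j)+1}=0$, and for $0<k<\min(i,j)+1$, \[u_{ijk}=\min(u_{i-1,j,k-1},u_{i,j-1,k-1})+\max(u_{i-1,j,k},u_{i,j-1,k})-u_{i-1,j-1,k-1}+t_{ijk},\] where $t_{ij1}=t_{ij}$ if $(i,j)\in\lambda$ (and $0$ otherwise) and $t_{ijk}=0$ for $k\ne1$. *)

(* Defs.v *)
From mathcomp Require Import all_boot all_order all_algebra.
Set Implicit Arguments. Unset Strict Implicit. Unset Printing Implicit Defensive.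
Import Order.TTheory GRing.Theory Num.Theory.
Local Open Scope ring_scope.

(* A partition lambda is a weakly decreasing list of row lengths
   (lambda_1 >= lambda_2 >= ...); trailing zero parts are harmless. *)
Definition is_partition (lam : seq nat) : bool := sorted geq lam.

(* Boxes use 1-based matrix coordinates: (i,j) is a box iff
   i >= 1, j >= 1 and j <= lambda_i. *)
Definition in_shape (lam : seq nat) (b : nat * nat) : bool :=
  [&& (0 < b.1)%N, (0 < b.2)%N & (b.2 <= nth 0%N lam b.1.-1)%N].

Definition border_box (lam : seq nat) (i j : nat) : bool :=
  in_shape lam (i, j) && ~~ in_shape lam (i.+1, j.+1).

(* An N-tableau of shape lambda is a function T : nat -> nat -> nat;
   only its values on boxes of lambda are used. *)

(* A valid build order of lambda: a duplicate-free enumeration of the boxes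
   of lambda such that every prefix is a Young diagram (down-closed set of
   boxes); hence each added box is a corner box of the new shape. *)
Definition build_order (lam : seq nat) (s : seq (nat * nat)) : Prop :=
  [/\ uniq s,
      (forall b, (b \in s) = in_shape lam b) &
      (forall n a b a' b', (a, b) \in take n s ->
          (0 < a')%N -> (0 < b')%N -> (a' <= a)%N -> (b' <= b)%N ->
          (a', b') \in take n s)].

(* One step: current shape sh (list of boxes) with entries f (the toggled
   tableau of the current tableau); add corner box (i,j) with entry x. *)
Definition toggle_step (sh : seq (nat * nat)) (f : nat -> nat -> int)
    (i j : nat) (x : nat) : nat -> nat -> int :=
  let g a b := if (a, b) \in sh then f a b else 0 in
  fun a b =>
    if (a == i) && (b == j) then
      Num.max (g i.-1 j) (g i j.-1) + x%:Z
    else if [&& (0 < a)%N, (0 < b)%N, (a < i)%N, (b < j)%N & (i - a == j - b)%N]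
    then (* k = i - a, 1 <= k < min(i,j):
            alpha_{k+1} = g (a-1) b, gamma_{k+1} = g a (b-1),
            alpha_k = g a (b+1), gamma_k = g (a+1) b, beta_k = g a b *)
      Num.max (g a.-1 b) (g a b.-1) + Num.min (g a b.+1) (g a.+1 b) - g a b
    else g a b.

Definition toggle_fold (T : nat -> nat -> nat)
    (st : seq (nat * nat) * (nat -> nat -> int)) (bx : nat * nat) :=
  (rcons st.1 bx, toggle_step st.1 st.2 bx.1 bx.2 (T bx.1 bx.2)).

(* The toggle image of T built along the order s (starting from the empty
   tableau, whose entries are all 0); entries outside the shape read 0. *)
Definition toggle (T : nat -> nat -> nat) (s : seq (nat * nat)) : nat -> nat -> int :=
  let st := foldl (toggle_fold T) ([::], fun _ _ => 0) s in
  fun a b => if (a, b) \in st.1 then st.2 a b else 0.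

(* u_{ijk} for i, j, k >= 0; u_{i,j,0} = 0 and u_{i,j,k} = 0 for
   k >= min(i,j)+1 (the paper only uses k = min(i,j)+1). The recursion is
   well-founded on i + j (fuel n). *)
Fixpoint uaux (lam : seq nat) (T : nat -> nat -> nat) (n i j k : nat) : int :=
  match n with
  | 0%N => 0
  | n'.+1 =>
      if (k == 0%N) || (minn i j < k)%N then 0 else
      let t := if (k == 1%N) && in_shape lam (i, j) then (T i j)%:Z else 0 in
      Num.min (uaux lam T n' i.-1 j k.-1) (uaux lam T n' i j.-1 k.-1)
      + Num.max (uaux lam T n' i.-1 j k) (uaux lam T n' i j.-1 k)
      - uaux lam T n' i.-1 j.-1 k.-1 + t
  end.

Definition U (lam : seq nat) (T : nat -> nat -> nat) (i j k : nat) : int :=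
  uaux lam T (i + j) i j k.

(* Main.v *)
Require Import Defs.
From mathcomp Require Import all_boot all_order all_algebra.
From mathcomp Require Import zify.
Import Order.TTheory GRing.Theory Num.Theory.
Local Open Scope ring_scope.

Lemma uaux_fuel lam T n n' i j k : (i + j <= n)%N -> (i + j <= n')%N ->
  uaux lam T n i j k = uaux lam T n' i j k.
Proof.
elim: n n' i j k => [|n IH] [|n'] i j k h1 h2 //=.
- have -> : i = 0%N by lia. have -> : j = 0%N by lia. by case: k.
- have -> : i = 0%N by lia. have -> : j = 0%N by lia. by case: k.
case: ifP => // /norP [k0]; rewrite -leqNgt => km.
have i0 : (0 < i)%N by lia. have j0 : (0 < j)%N by lia.
by rewrite !(IH n') //; lia.
Qed.

Lemma U_eq lam T i j k : U lam T i j k =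
  if (k == 0%N) || (minn i j < k)%N then 0 else
  Num.min (U lam T i.-1 j k.-1) (U lam T i j.-1 k.-1)
  + Num.max (U lam T i.-1 j k) (U lam T i j.-1 k)
  - U lam T i.-1 j.-1 k.-1
  + (if (k == 1%N) && in_shape lam (i, j) then (T i j)%:Z else 0).
Proof.
rewrite /U; case: ifP => H.
  by case: (i + j)%N => //= n; rewrite H.
move/norP: H => [k0]; rewrite -leqNgt => km.
have i0 : (0 < i)%N by lia. have j0 : (0 < j)%N by lia.
have -> : (i + j = (i + j).-1.+1)%N by lia.
rewrite /= (negbTE k0) ltnNge km /=.
have F a b c : (a + b <= (i + j).-1)%N -> uaux lam T (i + j).-1 a b c = uaux lam T (a + b) a b c.
  by move=> h; apply: uaux_fuel.
by rewrite !F //; lia.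
Qed.
Definition DC (p : seq (nat * nat)) := forall a b a' b', (a, b) \in p ->
  (0 < a')%N -> (0 < b')%N -> (a' <= a)%N -> (b' <= b)%N -> (a', b') \in p.

Definition Inv lam T (p : seq (nat * nat)) (f : nat -> nat -> int) :=
  forall a b m, (a, b) \in p -> (a + m, b + m) \in p ->
  ((a + m).+1, (b + m).+1) \notin p -> f a b = U lam T (a + m) (b + m) m.+1.

Lemma step lam T p f i j :
  (forall a b, (a, b) \in rcons p (i, j) -> (0 < a)%N /\ (0 < b)%N) ->
  DC p -> DC (rcons p (i, j)) -> (i, j) \notin p -> in_shape lam (i, j) ->
  Inv lam T p f -> Inv lam T (rcons p (i, j)) (toggle_step p f i j (T i j)).
Proof.
move=> pos dcp dcq nin ins inv.
have ij0 : (0 < i)%N /\ (0 < j)%N by apply: pos; rewrite mem_rcons mem_head.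
have corner c d : (c, d) \in p -> (i <= c)%N -> (j <= d)%N -> False.
  move=> H ic jd; move/negP: nin; apply; apply: (dcp c d) => //; lia.
have inq c d : (0 < c)%N -> (0 < d)%N -> (c <= i)%N -> (d <= j)%N -> ~~ ((c == i) && (d == j)) -> (c, d) \in p.
  move=> c0 d0 ci dj ne; have := dcq i j c d; rewrite mem_rcons mem_head => /(_ isT c0 d0 ci dj).
  by rewrite mem_rcons in_cons xpair_eqE (negbTE ne).
have invp a b c d e : (a, b) \in p -> (c, d) \in p -> (c.+1, d.+1) \notin p ->
    (c - a = d - b)%N -> (a <= c)%N -> (b <= d)%N -> e = (c - a).+1 -> f a b = U lam T c d e.
  move=> H1 H2 H3 H4 H5 H6 ->.
  have E1 : c = (a + (c - a))%N by lia. have E2 : d = (b + (c - a))%N by lia.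
  rewrite {1 2 3}E1 {1 2 3}E2 in H2 H3 *.
  exact: inv.
have U0 c d e : (minn c d < e)%N -> U lam T c d e = 0.
  by move=> h; rewrite U_eq h orbT.
move=> a b m Hab Hm Hm1.
rewrite /toggle_step.
case: ifP => [/andP[/eqP ea /eqP eb]|ne1].
  subst a b.
  case: m Hm Hm1 => [|m] Hm Hm1; last first.
    move: Hm; rewrite mem_rcons in_cons xpair_eqE.
    case/orP => [/andP[/eqP ? _]|H]; first lia.
    by case: (corner _ _ H); lia.
  rewrite !addn0 U_eq /= ins.
  have -> : (minn i j < 1)%N = false by case: ij0; lia.
  have U00 c d : U lam T c d 0 = 0 by rewrite U_eq.
  rewrite !U00 minxx add0r subr0.
  have -> : (if (i.-1, j) \in p then f i.-1 j else 0) = U lam T i.-1 j 1.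
    case: ifP => H.
      apply: invp => //; try lia.
      rewrite prednK; last lia.
      by apply/negP => /corner; lia.
    have i1 : i = 1%N.
      case: (ltngtP i 1) => // h; first lia.
      by rewrite inq in H => //; lia.
    by rewrite i1 U0 //; lia.
  have -> : (if (i, j.-1) \in p then f i j.-1 else 0) = U lam T i j.-1 1.
    case: ifP => H.
      apply: invp => //; try lia.
      rewrite prednK; last lia.
      by apply/negP => /corner; lia.
    have j1 : j = 1%N.
      case: (ltngtP j 1) => // h; first lia.
      by rewrite inq in H => //; lia.
    by rewrite j1 U0 //; lia.
  by [].
have Hp : (a, b) \in p.
  by move: Hab; rewrite mem_rcons in_cons xpair_eqE ne1.
case: ifP => [/and5P[a0 b0 ai bj /eqP dk]|nd].
  have Hmk : m = (i - a)%N.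
    case: (ltngtP m (i - a)) => // h.
      case/negP: Hm1; apply: (dcq i j); rewrite ?mem_rcons ?mem_head //; lia.
    move: Hm; rewrite mem_rcons in_cons xpair_eqE.
    case/orP => [/andP[/eqP ? _]|H]; first lia.
    by case: (corner _ _ H); lia.
  subst m.
  have -> : (a + (i - a))%N = i by lia.
  have -> : (b + (i - a))%N = j by lia.
  have np c d : (c, d) \in p -> (0 < c)%N /\ (0 < d)%N.
    by move=> H; apply: pos; rewrite mem_rcons in_cons H orbT.
  have gab : (if (a, b) \in p then f a b else 0) = U lam T i.-1 j.-1 (i - a)%N.
    rewrite Hp (invp a b i.-1 j.-1 (i - a)%N) //; try lia.
    - by apply: inq => //; lia.
    - by rewrite !prednK //; lia.
  have g1 : (if (a, b.+1) \in p then f a b.+1 else 0) = U lam T i.-1 j (i - a)%N.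
    rewrite inq; try lia.
    apply: invp; try lia.
    - by apply: inq => //; lia.
    - by apply: inq => //; lia.
    - by rewrite prednK; [apply/negP => /corner; lia|lia].
  have g2 : (if (a.+1, b) \in p then f a.+1 b else 0) = U lam T i j.-1 (i - a)%N.
    rewrite inq; try lia.
    apply: invp; try lia.
    - by apply: inq => //; lia.
    - by apply: inq => //; lia.
    - by rewrite prednK; [apply/negP => /corner; lia|lia].
  have g3 : (if (a.-1, b) \in p then f a.-1 b else 0) = U lam T i.-1 j (i - a).+1.
    case: (ltngtP a 1) => h; first lia.
      rewrite inq; try lia.
      apply: invp; try lia.
      - by apply: inq => //; lia.
      - by apply: inq => //; lia.
      - by rewrite prednK; [apply/negP => /corner; lia|lia].
    subst a; case: ifP => [/np|_]; first lia.
    by rewrite U0 //; lia.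
  have g4 : (if (a, b.-1) \in p then f a b.-1 else 0) = U lam T i j.-1 (i - a).+1.
    case: (ltngtP b 1) => h; first lia.
      rewrite inq; try lia.
      apply: invp; try lia.
      - by apply: inq => //; lia.
      - by apply: inq => //; lia.
      - by rewrite prednK; [apply/negP => /corner; lia|lia].
    subst b; case: ifP => [/np|_]; first lia.
    by rewrite U0 //; lia.
  rewrite g1 g2 g3 g4 gab [U lam T i j _]U_eq.
  have -> : ((i - a).+1 == 0%N) || (minn i j < (i - a).+1)%N = false by lia.
  have -> : ((i - a).+1 == 1%N) = false by lia.
  by rewrite /= addr0 (addrC (Num.max _ _)).

rewrite Hp; apply: inv => //.
  move: Hm; rewrite mem_rcons in_cons xpair_eqE.
  case/orP => [/andP[/eqP e1 /eqP e2]|//].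
  have [a0 b0] : (0 < a)%N /\ (0 < b)%N by apply: pos; rewrite mem_rcons in_cons Hp orbT.
  case: m e1 e2 Hm1 => [|m] e1 e2 Hm1.
    have ea : a = i by lia.
    have eb : b = j by lia.
    by move: ne1; rewrite ea eb !eqxx.
  move: nd; rewrite a0 b0 /=.
  have -> : (a < i)%N by lia.
  have -> : (b < j)%N by lia.
  have -> : (i - a)%N == (j - b)%N by apply/eqP; lia.
  by [].
by apply: contra Hm1; rewrite mem_rcons in_cons => ->; rewrite orbT.
Qed.
Theorem proposition4p2 (lam : seq nat) (T : nat -> nat -> nat)
    (s : seq (nat * nat)) (i j m : nat) :
  is_partition lam -> build_order lam s ->
  in_shape lam (i, j) -> border_box lam (i + m) (j + m) ->
  toggle T s i j = U lam T (i + m) (j + m) m.+1.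
Proof.
move=> _ [us mems dcs] ins /andP[bm bm1].
have posS a b : (a, b) \in s -> (0 < a)%N /\ (0 < b)%N.
  by rewrite mems /in_shape /= => /and3P[].
have dct n : DC (take n s) by move=> a b a' b' H *; apply: (dcs n a b).
have key n : let st := foldl (toggle_fold T) ([::], fun _ _ => 0) (take n s) in
    st.1 = take n s /\ Inv lam T (take n s) st.2.
  elim: n => [|n [IH1 IH2]] /=.
    by rewrite take0; split => // a b m'.
  case: (ltnP n (size s)) => hn; last first.
    by rewrite !take_oversize ?(leq_trans hn) // in IH1 IH2 *.
  rewrite (take_nth (0%N, 0%N) hn) foldl_rcons /toggle_fold IH1 /=.
  split => //.
  case E: (nth (0%N, 0%N) s n) => [x y] /=.
  have xs : (x, y) \in s by rewrite -E mem_nth.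
  have U1 := take_uniq n.+1 us; rewrite (take_nth (0%N, 0%N) hn) E rcons_uniq in U1.
  case/andP: U1 => nin _.
  apply: step => //.
  - move=> a b; rewrite mem_rcons in_cons => /orP[/eqP [-> ->]|/mem_take]; exact: posS.
  - by have := dct n.+1; rewrite (take_nth (0%N, 0%N) hn) E.
  - by rewrite -mems.
have [K1 K2] := key (size s).
rewrite take_size in K1 K2.
rewrite /toggle K1 mems ins.
apply: K2; rewrite ?mems //.
Qed.
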